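(* Let $(X_{m,t})$ be a random array in $\Omega^{M\times(T+1)}$ whose rows are independent, each row $m$ being a Markov chain with transition matrix $P_m$. Then for all $i\in\Omega$, $\varepsilon>0$ and $0<s_1\le s_2$, \[ \Pr\big(\|\hat P_{i,:}-\tilde P_{i,:}\|_1\ge\varepsilon,\ s_1\le N_i\le s_2\big) \ \le\ (1+|\Omega|)\exp\left(-\frac{3\varepsilon^2 s_1}{6\sqrt2|\Omega|s_2/s_1 + 2\sqrt2|\Omega|^{1/2}\varepsilon}\right). \]
   Context: $\Omega$ is a finite set, $M,T\ge1$ integers, rows indexed by $m=1,\dots,M$ and columns by $t=0,\dots,T$. Let $N_{m,i}=\sum_{t=1}^T1(X_{m,t-1}=i)$, $N_i=\sum_mN_{m,i}$, $N_{i,j}=\sum_{m=1}^M\sum_{t=1}^T1(X_{m,t-1}=i,X_{m,t}=j)$. The empirical transition matrix is $\hat P_{i,j}=N_{i,j}/N_i$ if $N_i>0$ and $1/|\Omega|$ otherwise. Define $\tilde P_{i,j}=\sum_m\frac{N_{m,i}}{N_i}P_m(i,j)$ if $N_i>0$ and $1/|\Omega|$ otherwise. $\|\cdot\|_1$ is the $\ell_1$ norm of a row vector. *)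

(* Defs.v *)
From HB Require Import structures.
From mathcomp Require Import all_boot all_order all_algebra.
From mathcomp Require Import reals sequences exp.
Set Implicit Arguments. Unset Strict Implicit. Unset Printing Implicit Defensive.
Import Order.TTheory GRing.Theory Num.Theory.
Local Open Scope ring_scope.

(* An array x in Omega^{M x (T+1)}: rows m : 'I_M (paper's m = 1..M),
   columns t : 'I_T.+1 (paper's t = 0..T). *)
Definition array (Omega : finType) (M T : nat) :=
  {ffun 'I_M -> {ffun 'I_T.+1 -> Omega}}.

(* For t : 'I_T (t = 0..T-1), the paper's pair (X_{m,t}, X_{m,t+1}),
   i.e. (X_{m,t'-1}, X_{m,t'}) with t' = t+1 ranging over 1..T. *)
Definition prevc (T : nat) (t : 'I_T) : 'I_T.+1 := widen_ord (leqnSn T) t.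
Definition nextc (T : nat) (t : 'I_T) : 'I_T.+1 := lift ord0 t.

Definition Nmi (Omega : finType) M T (x : array Omega M T) (m : 'I_M) (i : Omega) : nat :=
  #|[set t : 'I_T | x m (prevc t) == i]|.
Definition Ni (Omega : finType) M T (x : array Omega M T) (i : Omega) : nat :=
  \sum_(m < M) Nmi x m i.
Definition Nij (Omega : finType) M T (x : array Omega M T) (i j : Omega) : nat :=
  \sum_(m < M) #|[set t : 'I_T | (x m (prevc t) == i) && (x m (nextc t) == j)]|.

Definition Phat (R : realType) (Omega : finType) M T (x : array Omega M T) (i j : Omega) : R :=
  if (0 < Ni x i)%N then (Nij x i j)%:R / (Ni x i)%:R else 1 / (#|Omega|)%:R.

Definition Ptilde (R : realType) (Omega : finType) M T (P : 'I_M -> Omega -> Omega -> R)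
    (x : array Omega M T) (i j : Omega) : R :=
  if (0 < Ni x i)%N then \sum_(m < M) ((Nmi x m i)%:R / (Ni x i)%:R) * P m i j
  else 1 / (#|Omega|)%:R.

Definition row_l1_dist (R : realType) (Omega : finType) M T (P : 'I_M -> Omega -> Omega -> R)
    (x : array Omega M T) (i : Omega) : R :=
  \sum_(j : Omega) `|Phat R x i j - Ptilde P x i j|.

Definition is_distribution (R : realType) (Omega : finType) (mu : Omega -> R) : Prop :=
  (forall a, 0 <= mu a) /\ \sum_(a : Omega) mu a = 1.
Definition is_stochastic (R : realType) (Omega : finType) (Q : Omega -> Omega -> R) : Prop :=
  forall a, is_distribution (Q a).

(* Law of the random array whose rows are independent, row m being a Markov
   chain with initial distribution mu m and transition matrix P m. *)
Definition markov_array_law (R : realType) (Omega : finType) M T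
    (mu : 'I_M -> Omega -> R) (P : 'I_M -> Omega -> Omega -> R) (x : array Omega M T) : R :=
  \prod_(m < M) (mu m (x m ord0) * \prod_(t < T) P m (x m (prevc t)) (x m (nextc t))).

Definition Prob (R : realType) (Omega : finType) M T
    (mu : 'I_M -> Omega -> R) (P : 'I_M -> Omega -> Omega -> R) (A : pred (array Omega M T)) : R :=
  \sum_(x : array Omega M T | A x) markov_array_law mu P x.

(* Main.v *)
Require Import Defs.
From HB Require Import structures.
From mathcomp Require Import all_boot all_order all_algebra.
From mathcomp Require Import reals sequences exp.
From mathcomp Require Import topology normedtype.
From mathcomp Require Import ring lra.
Import Order.TTheory GRing.Theory Num.Theory.
Set Implicit Arguments. Unset Strict Implicit. Unset Printing Implicit Defensive.
Local Open Scope ring_scope.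

Lemma fact_bound n : (2 * 3 ^ n <= (n.+2)`!)%N.
Proof.
elim: n => [//|n IH]. rewrite factS expnS.
rewrite mulnCA. apply: leq_mul => //. 
Qed.

Section S.
Variable R : realType.

Lemma term_bound (y : R) n : `|y| <= 3/2 ->
  y ^+ n.+2 / (n.+2`!)%:R <= y ^+ 2 * (2^-1) ^+ n.+1.
Proof.
move=> hy.
have hf : (2 * 3 ^+ n : R) <= (n.+2`!)%:R.
  have := fact_bound n; rewrite -(ler_nat R) natrM natrX => h. exact: h.
have fpos : (0 : R) < (n.+2`!)%:R by rewrite ltr0n fact_gt0.
have hn : `|y| ^+ n <= (3/2) ^+ n.
  by apply: lerXn2r => //; rewrite qualifE /= ?normr_ge0 //; lra.
have h1 : y ^+ n.+2 <= y ^+ 2 * (3/2) ^+ n.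
  apply: (le_trans (ler_norm _)). rewrite normrX -addn2 exprD mulrC real_normK ?num_real //.
  have := sqr_ge0 y; nra.
rewrite ler_pdivrMr //.
apply: (le_trans h1). rewrite -mulrA.
suff h2 : (3/2 : R) ^+ n <= 2^-1 ^+ n.+1 * (n.+2)`!%:R by have := sqr_ge0 y; nra.
have e : (3/2 : R) ^+ n = 2^-1 ^+ n.+1 * (2 * 3 ^+ n).
  by rewrite exprS exprMn; field.
rewrite e. have : (0:R) <= 2^-1 ^+ n.+1 by apply: exprn_ge0; rewrite invr_ge0. nra.
Qed.

Lemma partial_bound (y : R) n : `|y| <= 3/2 ->
  \sum_(0 <= k < n.+2) y ^+ k / (k`!)%:R <= 1 + y + y ^+ 2 * (1 - (2^-1) ^+ n).
Proof.
move=> hy; elim: n => [|n IH].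
  rewrite big_nat_recr //= big_nat_recr //= big_nil add0r expr0 expr1 !divr1.
  by rewrite subrr mulr0 addr0.
rewrite big_nat_recr //=.
have := @term_bound y n hy; move: IH; rewrite !exprS; nra.
Qed.

Lemma expR_quad (y : R) : `|y| <= 3/2 -> expR y <= 1 + y + y ^+ 2.
Proof.
move=> hy. rewrite /expR.
apply: limr_le; first exact: is_cvg_series_exp_coeff.
near=> k.
have hk : (2 <= k)%N by near: k; exists 2%N.
rewrite -(subnK hk) /series /= addn2.
apply: (le_trans (@partial_bound y (k-2) hy)).
have : (0:R) <= 2^-1 ^+ (k-2) by apply: exprn_ge0; rewrite invr_ge0.
have := sqr_ge0 y. nra.
Unshelve. all: by end_near.
Qed.
End S.

Section MGF.
Variable R : realType.
Variable Omega : finType.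

Lemma mgf_bound (q f : Omega -> R) (lam : R) :
  (forall v, 0 <= q v) -> \sum_v q v = 1 ->
  (forall v, f v * f v = f v) -> (forall v, 0 <= f v <= 1) ->
  0 <= lam <= 3/2 ->
  \sum_v q v * expR (lam * (f v - \sum_w q w * f w)) <= expR (lam ^+ 2 / 4).
Proof.
move=> q0 q1 ff f01 hl.
set p := \sum_w q w * f w.
have p01 : 0 <= p <= 1.
  apply/andP; split; first by apply: sumr_ge0 => v _; have := f01 v; have := q0 v; nra.
  rewrite -q1; apply: ler_sum => v _; have := f01 v; have := q0 v; nra.
apply: le_trans (_ : \sum_v (q v * (lam + lam * (1 - 2 * p) * lam) * f v
    + q v * (1 - lam * p + lam ^+ 2 * p ^+ 2)) <= _).
  apply: ler_sum => v _.
  have hy : `|lam * (f v - p)| <= 3/2.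
    rewrite normrM ger0_norm; last by case/andP: hl.
    have := f01 v; move: p01 hl => /andP[? ?] /andP[? ?] /andP[? ?].
    have : `|f v - p| <= 1 by rewrite ler_norml; apply/andP; split; lra.
    have := normr_ge0 (f v - p). nra.
  have h1 := ler_wpM2l (q0 v) (@expR_quad _ _ hy).
  have h2 : q v * lam ^+ 2 * (f v * f v) = q v * lam ^+ 2 * f v by rewrite ff.
  apply: (le_trans h1). rewrite le_eqVlt; apply/orP; left; apply/eqP.
  move: h2. rewrite !expr2. move=> h2. 
  transitivity (q v * (1 - lam * p + lam * lam * p * p) + q v * (lam - 2 * lam * lam * p) * f v + q v * lam * lam * (f v * f v)); first by ring.
  rewrite ff. ring.
rewrite big_split /= -!mulr_suml q1 mul1r.
rewrite (eq_bigr (fun v => (lam + lam * (1 - 2 * p) * lam) * (q v * f v))); last first.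
  by move=> v _; ring.
rewrite -mulr_sumr -/p.
apply: le_trans (expR_ge1Dx _).
have := sqr_ge0 (lam * (p - 1/2)). nra.
Qed.
End MGF.

Section Chain.
Variable R : realType.
Variable Omega : finType.

Definition consf n (u : Omega) (z : {ffun 'I_n -> Omega}) : {ffun 'I_n.+1 -> Omega} :=
  [ffun k : 'I_n.+1 => if unlift ord0 k is Some k' then z k' else u].

Lemma consf0 n u (z : {ffun 'I_n -> Omega}) : consf u z ord0 = u.
Proof. by rewrite ffunE unlift_none. Qed.

Lemma consfS n u (z : {ffun 'I_n -> Omega}) k : consf u z (lift ord0 k) = z k.
Proof. by rewrite ffunE liftK. Qed.

Lemma sum_ffunS n (F : {ffun 'I_n.+1 -> Omega} -> R) :
  \sum_y F y = \sum_u \sum_(z : {ffun 'I_n -> Omega}) F (consf u z).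
Proof.
rewrite pair_big /=.
pose g (y : {ffun 'I_n.+1 -> Omega}) := (y ord0, [ffun k => y (lift ord0 k)]).
rewrite (reindex (fun p : Omega * {ffun 'I_n -> Omega} => consf p.1 p.2)) //.
exists g.
  move=> [u z] _; rewrite /g consf0; congr pair; apply/ffunP => k; by rewrite ffunE consfS.
move=> y _; apply/ffunP => k; rewrite /g /= ffunE.
by case: unliftP => [j ->|->]; rewrite ?ffunE.
Qed.

Lemma prevc_lift n (t : 'I_n) : prevc (lift ord0 t) = lift ord0 (prevc t).
Proof. by apply: val_inj. Qed.
Lemma nextc_lift n (t : 'I_n) : nextc (lift ord0 t) = lift ord0 (nextc t).
Proof. by apply: val_inj. Qed.
Lemma prevc0 n : prevc (ord0 : 'I_n.+1) = ord0.
Proof. by apply: val_inj. Qed.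
Lemma nextc0 n : nextc (ord0 : 'I_n.+1) = lift ord0 ord0.
Proof. by apply: val_inj. Qed.

Lemma chain_le (Q : Omega -> Omega -> R) :
  (forall u v, 0 <= Q u v) -> (forall u, \sum_v Q u v <= 1) ->
  forall n (mu : Omega -> R), (forall u, 0 <= mu u) -> \sum_u mu u <= 1 ->
  \sum_(y : {ffun 'I_n.+1 -> Omega}) mu (y ord0) *
      \prod_(t < n) Q (y (prevc t)) (y (nextc t)) <= 1.
Proof.
move=> Q0 Q1; elim=> [|n IH] mu mu0 mu1.
  rewrite sum_ffunS; apply: le_trans mu1; apply: ler_sum => u _.
  rewrite (eq_bigr (fun _ => mu u)); last by move=> z _; rewrite consf0 big_ord0 mulr1.
  by rewrite sumr_const card_ffun card_ord expn0 mulr1n.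
rewrite sum_ffunS; apply: le_trans mu1; apply: ler_sum => u _.
rewrite (eq_bigr (fun z : {ffun 'I_n.+1 -> Omega} => mu u * (Q u (z ord0) *
      \prod_(t < n) Q (z (prevc t)) (z (nextc t))))); last first.
  move=> z _; rewrite consf0 big_ord_recl prevc0 nextc0 consf0 consfS; congr (_ * (_ * _)).
  by apply: eq_bigr => t _; rewrite prevc_lift nextc_lift !consfS.
rewrite -mulr_sumr -[X in _ <= X]mulr1; apply: ler_wpM2l => //.
by apply: IH.
Qed.
End Chain.

Section Num.
Variable R : realType.

Lemma fin_num (d : nat) (z : R) : (1 <= d)%N -> 0 < z -> (1 + d%:R) * z ^+ 2 < 1 ->
  (2 ^+ d - 2) * z ^+ d <= (1 + d%:R) * z ^+ 2.
Proof.
case: d => [//|[|[|d]]] _ hz h.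
- by rewrite expr1 subrr mul0r; apply: mulr_ge0; [lra | exact: sqr_ge0].
- have := sqr_ge0 z; rewrite -!natrX /=; nra.
have h4 : (4 : R) <= 1 + (d.+3)%:R.
  rewrite -[d.+3]addn3 natrD; have := ler0n R d; lra.
have hz2 : z ^+ 2 < 1/4.
  have := sqr_ge0 z; move: h h4; set u := z ^+ 2; nra.
have hz1 : 2 * z <= 1 by move: hz2; rewrite expr2; nra.
have hp : (2 * z) ^+ d.+1 <= 1 by apply: exprn_ile1 => //; lra.
have e : (2 : R) ^+ d.+3 * z ^+ d.+3 = 4 * z ^+ 2 * (2 * z) ^+ d.+1.
  by rewrite exprMn !exprS; ring.
have hz0 : 0 <= z ^+ 2 by exact: sqr_ge0.
have h2 : 0 <= 2 * z ^+ d.+3 by apply: mulr_ge0; [lra | apply: exprn_ge0; lra].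
rewrite mulrBl. apply: le_trans (_ : (2 : R) ^+ d.+3 * z ^+ d.+3 <= _); first lra.
rewrite e; nra.
Qed.

End Num.

Section Main.
Variable R : realType.
Variable Omega : finType.
Variables M T : nat.
Variable mu : 'I_M -> Omega -> R.
Variable P : 'I_M -> Omega -> Omega -> R.
Hypothesis hmu : forall m, is_distribution (mu m).
Hypothesis hP : forall m, is_stochastic (P m).
Variable i : Omega.

Definition fA (A : {set Omega}) (v : Omega) : R := (v \in A)%:R.
Definition pA (A : {set Omega}) (m : 'I_M) : R := \sum_v P m i v * fA A v.
Definition ind (x : array Omega M T) m (t : 'I_T) : R := (x m (prevc t) == i)%:R.
Definition SA (A : {set Omega}) (x : array Omega M T) : R :=
  \sum_m \sum_t ind x m t * (fA A (x m (nextc t)) - pA A m).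
Definition Nr (x : array Omega M T) : R := (Ni x i)%:R.

Lemma card_real (I : finType) (p : pred I) : (#|[set t | p t]|)%:R = \sum_t (p t)%:R :> R.
Proof.
rewrite -sum1_card natr_sum big_mkcond /=; apply: eq_bigr => t _.
by rewrite inE; case: (p t).
Qed.

Lemma Nr_sum x : Nr x = \sum_m \sum_t ind x m t.
Proof.
rewrite /Nr /Ni natr_sum; apply: eq_bigr => m _.
by rewrite /Nmi card_real.
Qed.

Lemma Nij_sum x j : (Nij x i j)%:R = \sum_m \sum_t ind x m t * (x m (nextc t) == j)%:R :> R.
Proof.
rewrite /Nij natr_sum; apply: eq_bigr => m _.
by rewrite card_real; apply: eq_bigr => t _; rewrite /ind; case: (_ == i); rewrite ?mul1r ?mul0r.
Qed.

Lemma sum_eq_pick (y : Omega) (c : Omega -> R) : \sum_j c j * (y == j)%:R = c y.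
Proof.
rewrite (bigD1 y) //= eqxx mulr1 big1 ?addr0 // => j hj.
by rewrite eq_sym (negbTE hj) mulr0.
Qed.

Lemma pA_ge0 A m : 0 <= pA A m.
Proof.
apply: sumr_ge0 => v _; apply: mulr_ge0; first by case: (hP m i) => h _; exact: h.
by rewrite /fA ler0n.
Qed.

Lemma pA_le1 A m : pA A m <= 1.
Proof.
case: (hP m i) => h0 h1; rewrite -h1; apply: ler_sum => v _.
rewrite /fA; case: (v \in A); rewrite ?mulr1 ?mulr0 //.
Qed.

Lemma SA_le_Nr A x : SA A x <= Nr x.
Proof.
rewrite Nr_sum; apply: ler_sum => m _; apply: ler_sum => t _.
have h1 := pA_ge0 A m. have h2 : fA A (x m (nextc t)) <= 1 by rewrite /fA; case: (_ \in _).
have h3 : 0 <= ind x m t by rewrite /ind ler0n.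
have h4 : ind x m t <= 1 by rewrite /ind; case: (_ == _).
nra.
Qed.

Lemma SA_set0 x : SA set0 x = 0.
Proof.
rewrite /SA big1 // => m _; rewrite big1 // => t _.
have -> : pA set0 m = 0 by rewrite /pA big1 // => v _; rewrite /fA inE mulr0.
by rewrite /fA inE subr0 mulr0.
Qed.

Lemma SA_setT x : SA setT x = 0.
Proof.
rewrite /SA big1 // => m _; rewrite big1 // => t _.
have -> : pA setT m = 1.
  by case: (hP m i) => _ h1; rewrite -h1; apply: eq_bigr => v _; rewrite /fA inE mulr1.
by rewrite /fA inE subrr mulr0.
Qed.

Lemma key x A : (0 < Ni x i)%N ->
  \sum_j fA A j * (Phat R x i j - Ptilde P x i j) = SA A x / Nr x.
Proof.
move=> hN; rewrite /Phat /Ptilde hN.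
have hNr : Nr x != 0 by rewrite /Nr pnatr_eq0 -lt0n.
apply: (mulIf hNr); rewrite divfK //.
rewrite mulr_suml.
rewrite (eq_bigr (fun j => fA A j * (Nij x i j)%:R - \sum_m fA A j * ((Nmi x m i)%:R * P m i j))); last first.
  move=> j _; rewrite mulrBr mulrBl mulrA divfK //; congr (_ - _).
  rewrite mulr_sumr mulr_suml; apply: eq_bigr => m _; field; exact: hNr.
rewrite sumrB /SA.
have -> : \sum_m \sum_t ind x m t * (fA A (x m (nextc t)) - pA A m) =
  \sum_m \sum_t ind x m t * fA A (x m (nextc t)) - \sum_m \sum_t ind x m t * pA A m.
  by rewrite -sumrB; apply: eq_bigr => m _; rewrite -sumrB; apply: eq_bigr => t _; rewrite mulrBr.
congr (_ - _).
  transitivity (\sum_j \sum_m \sum_t ind x m t * (fA A j * (x m (nextc t) == j)%:R)).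
    apply: eq_bigr => j _; rewrite Nij_sum mulr_sumr; apply: eq_bigr => m _.
    by rewrite mulr_sumr; apply: eq_bigr => t _; ring.
  rewrite exchange_big; apply: eq_bigr => m _; rewrite exchange_big; apply: eq_bigr => t _.
  by rewrite -mulr_sumr sum_eq_pick.
rewrite exchange_big; apply: eq_bigr => m _.
have hN' : (Nmi x m i)%:R = \sum_t ind x m t :> R by rewrite /Nmi card_real.
rewrite -mulr_suml -hN' /pA mulr_sumr; apply: eq_bigr => j _; ring.
Qed.

Lemma event_A x (eps s1 : R) : 0 < eps -> 0 < s1 ->
  eps <= row_l1_dist P x i -> s1 <= Nr x ->
  exists A, [/\ (A != set0) && (A != setT), eps * s1 / 2 <= SA A x & eps <= 2].
Proof.
move=> he hs hl hN.
have hNpos : 0 < Nr x by lra.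
have hNi : (0 < Ni x i)%N by rewrite -(ltr0n R).
pose d j := Phat R x i j - Ptilde P x i j.
have hsum : \sum_j d j = 0.
  have := key setT hNi; rewrite SA_setT mul0r => h; rewrite -[RHS]h.
  by apply: eq_bigr => j _; rewrite /fA inE mul1r.
pose A := [set j | 0 <= d j].
have hl2 : row_l1_dist P x i = 2 * (SA A x / Nr x).
  rewrite -key // /row_l1_dist.
  transitivity (\sum_j (2 * (fA A j * d j) - d j)); last by rewrite sumrB hsum subr0 mulr_sumr.
  apply: eq_bigr => j _; rewrite /fA inE -/(d j).
  case: (lerP 0 (d j)) => h; first by rewrite ger0_norm // mul1r; ring.
  by rewrite ltr0_norm // mul0r mulr0 sub0r.
have h1 : eps * Nr x / 2 <= SA A x.
  rewrite hl2 in hl.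
  have e : SA A x = (SA A x / Nr x) * Nr x by rewrite divfK // gt_eqF.
  rewrite [X in _ <= X]e; move: hl; set q := SA A x / Nr x; nra.
have h2 : eps * s1 / 2 <= SA A x.
  apply: le_trans h1. nra.
have h3 := SA_le_Nr A x.
exists A; split => //; last by nra.
apply/andP; split; apply/eqP => hA; move: h2; rewrite hA ?SA_set0 ?SA_setT; nra.
Qed.

Definition gf (A : {set Omega}) (lam : R) (m : 'I_M) (u v : Omega) : R :=
  if u == i then expR (lam * (fA A v - pA A m) - lam ^+ 2 / 4) else 1.

Lemma gf_ge0 A lam m u v : 0 <= gf A lam m u v.
Proof. by rewrite /gf; case: (u == i); rewrite ?expR_ge0. Qed.

Lemma P_ge0 m u v : 0 <= P m u v.
Proof. by case: (hP m u) => h _; exact: h. Qed.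

Lemma gf_row A lam m u : 0 <= lam <= 3/2 -> \sum_v P m u v * gf A lam m u v <= 1.
Proof.
move=> hl; rewrite /gf; case: eqP => [->|_].
  under eq_bigr do rewrite expRD mulrA.
  rewrite -mulr_suml.
  have h := @mgf_bound R Omega (P m i) (fA A) lam (P_ge0 m i) (proj2 (hP m i)).
  have hff : forall v, fA A v * fA A v = fA A v.
    by move=> v; rewrite /fA; case: (v \in A); rewrite ?mulr1 ?mulr0.
  have hf01 : forall v, 0 <= fA A v <= 1.
    by move=> v; rewrite /fA; case: (v \in A); rewrite /= ?mulr1n ?mulr0n ?ler01 ?lexx.
  have := h hff hf01 hl.
  rewrite -/(pA A m) => hb.
  apply: (le_trans (ler_wpM2r (expR_ge0 _) hb)).
  by rewrite -expRD subrr expR0.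
by under eq_bigr do rewrite mulr1; case: (hP m u) => _ ->.
Qed.

Lemma Zsum A lam : 0 <= lam <= 3/2 ->
  \sum_(x : array Omega M T) markov_array_law mu P x * expR (lam * SA A x - lam ^+ 2 / 4 * Nr x) <= 1.
Proof.
move=> hl.
have eZ x : expR (lam * SA A x - lam ^+ 2 / 4 * Nr x) =
    \prod_m \prod_t gf A lam m (x m (prevc t)) (x m (nextc t)).
  rewrite Nr_sum /SA !mulr_sumr -sumrB expR_sum; apply: eq_bigr => m _.
  rewrite !mulr_sumr -sumrB expR_sum; apply: eq_bigr => t _.
  rewrite /gf /ind; case: (_ == i); last by rewrite !mul0r !mulr0 subrr expR0.
  by rewrite !mul1r mulr1.
under eq_bigr do rewrite eZ /markov_array_law -big_split /=.
under eq_bigr do under eq_bigr do rewrite -mulrA -big_split /=.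
rewrite -(bigA_distr_bigA (fun m (y : {ffun 'I_T.+1 -> Omega}) => mu m (y ord0) *
   \prod_(t < T) (P m (y (prevc t)) (y (nextc t)) * gf A lam m (y (prevc t)) (y (nextc t))))) /=.
apply: prodr_ile1 => m _; apply/andP; split.
  apply: sumr_ge0 => y _; apply: mulr_ge0; first by case: (hmu m) => h _; exact: h.
  by apply: prodr_ge0 => t _; apply: mulr_ge0; [exact: P_ge0 | exact: gf_ge0].
apply: (@chain_le R Omega (fun u v => P m u v * gf A lam m u v)).
- by move=> u v; apply: mulr_ge0; [exact: P_ge0 | exact: gf_ge0].
- by move=> u; exact: gf_row.
- by case: (hmu m).
- by case: (hmu m) => _ ->.
Qed.

Lemma law_ge0 (x : array Omega M T) : 0 <= markov_array_law mu P x.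
Proof.
apply: prodr_ge0 => m _; apply: mulr_ge0; first by case: (hmu m) => h _; exact: h.
by apply: prodr_ge0 => t _; exact: P_ge0.
Qed.

Lemma chernoff A lam a s2 : 0 <= lam <= 3/2 ->
  Prob mu P (fun x : array Omega M T => (a <= SA A x) && (Nr x <= s2))
  <= expR (- (lam * a) + lam ^+ 2 / 4 * s2).
Proof.
move=> hl; rewrite /Prob.
set c := expR (- (lam * a) + lam ^+ 2 / 4 * s2).
apply: le_trans (_ : \sum_(x : array Omega M T) markov_array_law mu P x *
     expR (lam * SA A x - lam ^+ 2 / 4 * Nr x) * c <= _); last first.
  by rewrite -mulr_suml -[X in _ <= X]mul1r; apply: ler_wpM2r; [exact: expR_ge0 | exact: Zsum].
rewrite [X in _ <= X](bigID (fun x : array Omega M T => (a <= SA A x) && (Nr x <= s2))) /=.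
rewrite -[X in X <= _]addr0; apply: lerD; last first.
  apply: sumr_ge0 => x _; apply: mulr_ge0; last exact: expR_ge0.
  by apply: mulr_ge0; [exact: law_ge0 | exact: expR_ge0].
apply: ler_sum => x /andP[h1 h2].
rewrite -mulrA -[X in X <= _]mulr1; apply: ler_wpM2l; first exact: law_ge0.
rewrite -expRD; apply: le_trans (expR_ge1Dx _).
have := sqr_ge0 lam; move: hl => /andP[hl1 hl2]; nra.
Qed.

Lemma prob_le1 (E : pred (array Omega M T)) : Prob mu P E <= 1.
Proof.
apply: le_trans (Zsum set0 (lam := 0) _); last by rewrite lexx /=; lra.
rewrite /Prob [X in _ <= X](bigID E) /= -[X in X <= _]addr0; apply: lerD.
  apply: ler_sum => x _; rewrite expr0n /= !mul0r subr0 expR0 mulr1 //.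
apply: sumr_ge0 => x _; apply: mulr_ge0; [exact: law_ge0 | exact: expR_ge0].
Qed.

Lemma union_bound (eps s1 s2 : R) : 0 < eps -> 0 < s1 ->
  Prob mu P (fun x : array Omega M T =>
      (eps <= row_l1_dist P x i) && (s1 <= (Ni x i)%:R <= s2))
  <= \sum_(A : {set Omega} | (A != set0) && (A != setT))
       Prob mu P (fun x : array Omega M T => (eps * s1 / 2 <= SA A x) && (Nr x <= s2)).
Proof.
move=> he hs; rewrite /Prob.
rewrite (eq_bigr (fun A : {set Omega} => \sum_(x : array Omega M T)
   (if (eps * s1 / 2 <= SA A x) && (Nr x <= s2) then markov_array_law mu P x else 0))); last first.
  by move=> A _; rewrite big_mkcond.
rewrite (exchange_big_dep xpredT) //= big_mkcond /=; apply: ler_sum => x _.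
case: ifP => [/andP[hl /andP[hN1 hN2]]|_]; last first.
  by apply: sumr_ge0 => A _; case: ifP => // _; exact: law_ge0.
have [A [hA hS _]] := event_A he hs hl hN1.
rewrite (bigD1 A) /=; last by rewrite hA.
rewrite ifT; last by apply/andP; split; [exact: hS | exact: hN2].
rewrite -[X in X <= _]addr0; apply: lerD => //.
by apply: sumr_ge0 => B _; case: ifP => // _; exact: law_ge0.
Qed.

Lemma card_A : (#|[pred A : {set Omega} | (A != set0) && (A != setT)]|).+2 = (2 ^ #|Omega|)%N.
Proof.
have e : #|{set Omega}| = (2 ^ #|Omega|)%N.
  by rewrite -(cardsT {set Omega}) -powersetT card_powerset cardsT.
rewrite -e [in RHS](cardD1 set0) [in RHS](cardD1 setT) !inE /=.
have hne : (setT : {set Omega}) != set0 by apply/set0Pn; exists i; rewrite inE.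
rewrite hne /= !add1n; congr (_.+2); apply: eq_card => A; rewrite !inE.
by rewrite andbT andbC.
Qed.

Lemma main_sec (eps s1 s2 : R) (heps : 0 < eps) (hs1 : 0 < s1) (hs12 : s1 <= s2) :
  Prob mu P (fun x : array Omega M T =>
      (eps <= row_l1_dist P x i) && (s1 <= (Ni x i)%:R <= s2))
  <= (1 + (#|Omega|)%:R) *
     expR (- (3 * eps ^+ 2 * s1) /
            (6 * Num.sqrt 2 * (#|Omega|)%:R * s2 / s1
             + 2 * Num.sqrt 2 * Num.sqrt ((#|Omega|)%:R) * eps)).
Proof.
set d := #|Omega|.
have hd : (1 <= d)%N by apply/card_gt0P; exists i.
have hdr : (1 : R) <= d%:R by rewrite ler1n.
have hRHS : 0 <= (1 + d%:R) * expR (- (3 * eps ^+ 2 * s1) /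
            (6 * Num.sqrt 2 * d%:R * s2 / s1 + 2 * Num.sqrt 2 * Num.sqrt (d%:R) * eps)).
  by apply: mulr_ge0; [lra | exact: expR_ge0].
case: (lerP eps 2) => he2; last first.
  rewrite /Prob big1 // => x /andP[hl /andP[h1 h2]].
  have [A [_ _ h]] := event_A heps hs1 hl h1; lra.
have hs2 : 0 < s2 by lra.
set lam := 3 * eps * s1 / (4 * s2).
have hlam : 0 <= lam <= 3/2.
  apply/andP; split; first by rewrite /lam; apply: divr_ge0; nra.
  by rewrite /lam ler_pdivrMr; nra.
set w := eps ^+ 2 * s1 ^+ 2 / s2.
have hw : 0 < w by rewrite /w; apply: divr_gt0 => //; apply: mulr_gt0; apply: exprn_gt0.
have hB : Prob mu P (fun x : array Omega M T =>
      (eps <= row_l1_dist P x i) && (s1 <= (Ni x i)%:R <= s2))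
     <= (2 ^+ d - 2) * expR (- (15/64 * w)).
  apply: le_trans (union_bound s2 heps hs1) _.
  apply: le_trans (_ : \sum_(A : {set Omega} | (A != set0) && (A != setT))
     expR (- (lam * (eps * s1 / 2)) + lam ^+ 2 / 4 * s2) <= _).
    by apply: ler_sum => A _; exact: chernoff.
  rewrite sumr_const.
  have hc : (#|[pred A : {set Omega} | (A != set0) && (A != setT)]|)%:R = (2 ^+ d - 2 : R).
    have := card_A; move/(congr1 (fun n => n%:R : R)); rewrite natrX -addn2 natrD => <-.
    by rewrite addrK.
  rewrite -[X in X <= _]mulr_natr hc mulrC.
  have -> : - (lam * (eps * s1 / 2)) + lam ^+ 2 / 4 * s2 = - (15/64 * w).
    by rewrite /lam /w; field; rewrite gt_eqF.
  done.
have hP1 := prob_le1 (fun x : array Omega M T =>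
      (eps <= row_l1_dist P x i) && (s1 <= (Ni x i)%:R <= s2)).
have hc0 : (0 : R) <= 2 ^+ d - 2.
  have := card_A; move/(congr1 (fun n => n%:R : R)); rewrite natrX -addn2 natrD => <-.
  by rewrite addrK ler0n.
set k := Num.sqrt (2 : R).
have hk0 : 0 < k by rewrite sqrtr_gt0.
have hk2 : k ^+ 2 = 2 by rewrite sqr_sqrtr.
have hk : 16/15 <= k by nra.
set q := Num.sqrt (d%:R : R).
have hq : 0 <= q by exact: sqrtr_ge0.
set E0 := eps ^+ 2 * s1 ^+ 2 / (2 * k * d%:R * s2).
set z := expR (- (E0 / 2)).
have hz : 0 < z by exact: expR_gt0.
have hdE : d%:R * E0 / 2 = w / (4 * k).
  rewrite /E0 /w; field; apply/and3P; split; rewrite ?gt_eqF //; lra.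
have hzd : expR (- (15/64 * w)) <= z ^+ d.
  rewrite /z -expRM_natl ler_expR.
  have -> : d%:R * - (E0/2) = - (w / (4*k)) by rewrite -hdE; ring.
  rewrite lerN2 ler_pdivrMr; last by lra.
  nra.
have hz2 : z ^+ 2 <= expR (- (3 * eps ^+ 2 * s1) /
            (6 * k * d%:R * s2 / s1 + 2 * k * q * eps)).
  rewrite /z -expRM_natl ler_expR.
  have hD1 : 0 < 6 * k * d%:R * s2 / s1.
    apply: divr_gt0 => //; apply: mulr_gt0 => //; apply: mulr_gt0; [nra | lra].
  have hkq : 0 <= k * q by apply: mulr_ge0 => //; lra.
  have hD2 : 0 <= 2 * k * q * eps by nra.
  have eD : E0 * (6 * k * d%:R * s2 / s1) = 3 * eps ^+ 2 * s1.
    rewrite /E0; field; apply/and4P; split; rewrite ?gt_eqF //; lra.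
  have hE0 : 0 <= E0.
    rewrite /E0; apply: divr_ge0; first by apply: mulr_ge0; apply: sqr_ge0.
    apply: mulr_ge0; last lra. apply: mulr_ge0; last lra. lra.
  rewrite ler_pdivlMr; last lra.
  have -> : (2%:R * - (E0 / 2)) = - E0 by field.
  nra.
have hfin := @fin_num R d z hd hz.
case: (lerP 1 ((1 + d%:R) * z ^+ 2)) => hc.
  apply: le_trans hP1 _; apply: le_trans hc _; apply: ler_wpM2l; [lra | exact: hz2].
apply: le_trans hB _; apply: le_trans (_ : (2 ^+ d - 2) * z ^+ d <= _).
  exact: ler_wpM2l.
apply: le_trans (hfin hc) _; apply: ler_wpM2l; [lra | exact: hz2].
Qed.

End Main.

Theorem proposition6p4 (R : realType) (Omega : finType) (M T : nat)
    (hM : (1 <= M)%N) (hT : (1 <= T)%N)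
    (mu : 'I_M -> Omega -> R) (P : 'I_M -> Omega -> Omega -> R)
    (hmu : forall m, is_distribution (mu m))
    (hP : forall m, is_stochastic (P m))
    (i : Omega) (eps s1 s2 : R)
    (heps : 0 < eps) (hs1 : 0 < s1) (hs12 : s1 <= s2) :
  Prob mu P (fun x : array Omega M T =>
      (eps <= row_l1_dist P x i) && (s1 <= (Ni x i)%:R <= s2))
  <= (1 + (#|Omega|)%:R) *
     expR (- (3 * eps ^+ 2 * s1) /
            (6 * Num.sqrt 2 * (#|Omega|)%:R * s2 / s1
             + 2 * Num.sqrt 2 * Num.sqrt ((#|Omega|)%:R) * eps)).
Proof.
exact: (@main_sec R Omega M T mu P hmu hP i eps s1 s2 heps hs1 hs12).
Qed.
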